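(* There exist a positive integer $N$ and a doubly-stochastic $N\times N$ matrix $A$ such that $$\mathrm{per}(A)\ <\ SD(A):=\prod_{1\le j\le N}\ \sum_{1\le i\le N}A(i,j)\prod_{m\ne i}\bigl(1-A(m,j)\bigr).$$
   Context: A doubly-stochastic matrix is an entrywise non-negative square matrix all of whose row and column sums equal $1$; $\mathrm{per}$ is the permanent. *)

(* Defs.v *)
From HB Require Import structures.
From mathcomp Require Import all_boot all_order all_algebra all_fingroup.
From Stdlib Require Rdefinitions.
From mathcomp Require Import Rstruct.
Set Implicit Arguments. Unset Strict Implicit. Unset Printing Implicit Defensive.
Import Order.TTheory GRing.Theory Num.Theory.
Local Open Scope ring_scope.

Definition permanent (R : comRingType) (n : nat) (A : 'M[R]_n) : R :=
  \sum_(s : 'S_n) \prod_(i < n) A i (s i).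

Definition doubly_stochastic (R : numDomainType) (n : nat) (A : 'M[R]_n) : Prop :=
  (forall i j, 0 <= A i j) /\
  (forall i, \sum_(j < n) A i j = 1) /\
  (forall j, \sum_(i < n) A i j = 1).

Definition SD (R : comRingType) (n : nat) (A : 'M[R]_n) : R :=
  \prod_(j < n) \sum_(i < n) (A i j * \prod_(m < n | m != i) (1 - A m j)).

(* Main.v *)
Require Import Defs.
From HB Require Import structures.
From mathcomp Require Import all_boot all_order all_algebra all_fingroup.
From Stdlib Require Rdefinitions.
From mathcomp Require Import Rstruct.
From mathcomp Require Import lra.
Import Order.TTheory GRing.Theory Num.Theory.
Local Open Scope ring_scope.
Notation R := Rdefinitions.R.
Definition a : R := 8^-1.
Definition b : R := 7/8.
Definition f (i j : nat) : R :=
  if (i == 0)%N then (if (j == 0)%N then 0 else a)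
  else if (j == 0)%N then a else if (i == j)%N then b else 0.
Definition A : 'M[R]_9 := \matrix_(i, j) f i j.
Notation o := (@ord0 8).

Lemma ne0 (i : 'I_9) : i != o -> (nat_of_ord i == 0%N) = false.
Proof. by move/negbTE. Qed.
Lemma A00 : A o o = 0. Proof. by rewrite mxE. Qed.
Lemma A0j j : j != o -> A o j = a.
Proof. by move=> /ne0 H; rewrite mxE /f /= H. Qed.
Lemma Ai0 i : i != o -> A i o = a.
Proof. by move=> /ne0 H; rewrite mxE /f /= H. Qed.
Lemma Aii i : i != o -> A i i = b.
Proof. by move=> /ne0 H; rewrite mxE /f /= H eqxx. Qed.
Lemma Aij i j : i != o -> j != o -> i != j -> A i j = 0.
Proof.
move=> /ne0 Hi /ne0 Hj /negbTE Hij; rewrite mxE /f /= Hi Hj.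
by rewrite (_ : (nat_of_ord i == j) = false).
Qed.

Lemma card7 (i j : 'I_9) : i != j -> #|[pred m | (m != i) && (m != j)]| = 7%N.
Proof.
move=> ij.
have := cardD1 j (predC1 i); rewrite cardC1 card_ord /= inE eq_sym ij /=.
move=> H.
have -> : #|[pred m | m != i & m != j]| = #|[predD1 predC1 i & j]|.
  by apply: eq_card => m; rewrite !inE andbC.
by move: H; rewrite add1n => -[].
Qed.

Lemma card8 (i : 'I_9) : #|[pred m | m != i]| = 8%N.
Proof.
transitivity #|predC1 i|; first by apply: eq_card => m; rewrite !inE.
by rewrite cardC1 card_ord.
Qed.

Lemma col0 : \sum_(i < 9) (A i o * \prod_(m < 9 | m != i) (1 - A m o)) = a *+ 8 * (1-a)^+7.
Proof.
rewrite (bigD1 o) //= A00 mul0r add0r.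
rewrite (eq_bigr (fun _ => a * (1-a)^+7)); last first.
  move=> i Hi; rewrite Ai0 //; congr (_ * _).
  rewrite (bigD1 o) /=; last by rewrite eq_sym.
  rewrite A00 subr0 mul1r.
  rewrite (eq_bigr (fun _ => 1 - a)); last by move=> m /andP[_ Hm]; rewrite Ai0.
  by rewrite prodr_const card7.
by rewrite sumr_const card8 mulrnAl.
Qed.

Lemma colj j : j != o ->
  \sum_(i < 9) (A i j * \prod_(m < 9 | m != i) (1 - A m j)) = a * (1-b) + b * (1-a).
Proof.
move=> Hj.
rewrite (bigD1 o) //= A0j //; congr (_ * _ + _).
  rewrite (bigD1 j) //= Aii // big1 ?mulr1 //.
  by move=> m /andP[Hm Hmj]; rewrite Aij // subr0.
rewrite (bigD1 j) //= Aii //.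
rewrite [X in _ + X]big1 ?addr0; last first.
  by move=> i /andP[Hi Hij]; rewrite Aij // mul0r.
congr (_ * _).
rewrite (bigD1 o) /=; last by rewrite eq_sym.
rewrite A0j // big1 ?mulr1 //.
by move=> m /andP[Hm Hmo]; rewrite Aij // 1?eq_sym // subr0.
Qed.

Lemma SD_val : SD A = a *+ 8 * (1-a)^+7 * (a * (1-b) + b * (1-a)) ^+ 8.
Proof.
rewrite /SD (bigD1 o) //= col0; congr (_ * _).
rewrite (eq_bigr (fun _ => a * (1-b) + b * (1-a))); last by move=> j Hj; rewrite colj.
by rewrite prodr_const card8.
Qed.

Lemma Asupp i j : A i j != 0 -> ((i == o) && (j != o)) || ((i != o) && ((j == o) || (j == i))).
Proof.
case: (eqVneq i o) => [->|io]; case: (eqVneq j o) => [->|jo] //=.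
all: try by rewrite A00 eqxx.
all: rewrite ?orbT //.
- case: (eqVneq j i) => // ji; by rewrite Aij // 1?eq_sym // eqxx.
Qed.

Arguments Asupp {i j}.

Lemma prod0 (s : 'S_9) : ~~ ((s o != o) && (s == tperm o (s o))) -> \prod_i A i (s i) = 0.
Proof.
move=> H; case: (boolP [forall i, A i (s i) != 0]) => [/forallP Hall | ]; last first.
  by rewrite negb_forall => /existsP [i]; rewrite negbK => /eqP Hi; rewrite (bigD1 i) //= Hi mul0r.
exfalso; move/negP: H; apply.
set j := s o.
have jo : j != o by move: (Asupp (Hall o)); rewrite eqxx /= orbF.
have sj : s j = o.
  move: (Asupp (Hall j)); rewrite (negbTE jo) /= => /orP[/eqP //|/eqP sjj].
  by move: jo; rewrite -{1}(perm_inj (sjj : s j = s o)) eqxx.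
rewrite jo /=; apply/eqP/permP => i.
case: tpermP => [->|->|/eqP io /eqP ij] //.
move: (Asupp (Hall i)); rewrite (negbTE io) /= => /orP[/eqP sio|/eqP //].
by move: ij; rewrite (perm_inj (etrans sio (esym sj))) eqxx.
Qed.

Lemma prodt j : j != o -> \prod_i A i (tperm o j i) = a * a * b ^+ 7.
Proof.
move=> jo.
rewrite (bigD1 o) //= tpermL A0j // (bigD1 j) //= tpermR Ai0 // -mulrA; congr (_ * (_ * _)).
rewrite (eq_bigr (fun _ => b)); last first.
  by move=> i /andP[io ij]; rewrite tpermD 1?eq_sym // Aii.
by rewrite prodr_const card7 // eq_sym.
Qed.

Lemma per_val : permanent A = (a * a * b ^+ 7) *+ 8.
Proof.
rewrite /permanent (partition_big (fun s : 'S_9 => s o) predT) //=.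
rewrite (bigD1 o) //= big1 ?add0r; last first.
  by move=> s /eqP so; apply: prod0; rewrite so eqxx.
rewrite (eq_bigr (fun _ => a * a * b ^+ 7)); last first.
  move=> j jo; rewrite (bigD1 (tperm o j)) /=; last by rewrite tpermL.
  rewrite prodt // big1 ?addr0 // => s /andP[/eqP so sne]; apply: prod0.
  by rewrite so (negbTE sne) andbF.
by rewrite sumr_const card8.
Qed.

Lemma ineq : permanent A < SD A.
Proof.
rewrite per_val SD_val /a /b. lra.
Qed.

Lemma Anonneg i j : 0 <= A i j.
Proof. rewrite mxE /f /a /b; repeat case: ifP => _; lra. Qed.

Lemma row_sum i : \sum_(j < 9) A i j = 1.
Proof.
case: (eqVneq i o) => [->|io].
  rewrite (bigD1 o) //= A00 add0r (eq_bigr (fun _ => a)); last by move=> j jo; rewrite A0j.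
  by rewrite sumr_const card8 /a; lra.
rewrite (bigD1 o) //= Ai0 // (bigD1 i) //= Aii // big1 ?addr0.
  by rewrite /a /b; lra.
by move=> j /andP[jo ji]; rewrite Aij // eq_sym.
Qed.

Lemma col_sum j : \sum_(i < 9) A i j = 1.
Proof.
case: (eqVneq j o) => [->|jo].
  rewrite (bigD1 o) //= A00 add0r (eq_bigr (fun _ => a)); last by move=> i io; rewrite Ai0.
  by rewrite sumr_const card8 /a; lra.
rewrite (bigD1 o) //= A0j // (bigD1 j) //= Aii // big1 ?addr0.
  by rewrite /a /b; lra.
by move=> i /andP[io ij]; rewrite Aij.
Qed.

Theorem mainTheorem16 :
  exists (N : nat) (A : 'M[Rdefinitions.R]_N),
    (0 < N)%N /\ doubly_stochastic A /\ permanent A < SD A.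
Proof.
exists 9%N, A; split => //; split; last exact: ineq.
split; first exact: Anonneg.
by split; [exact: row_sum | exact: col_sum].
Qed.
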